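(* Let $G$ be a graph, let $h\geq 1$ and $n$ be positive integers, let $\varepsilon\in(0,\frac19]$ and $\rho\in(0,\frac12]$. Suppose $V_1,\dots,V_h\subseteq V(G)$ is a $(\rho,\varepsilon,\geq n)$-rich inflation of $K_h$, and let $Y=\bigcup_{i=1}^hV_i$. Let $X\subseteq V(G)$ be disjoint from $Y$ with $|X|\geq n$ and $d_X(y)\geq p|X|$ for all $y\in Y$, where $p\geq(1-\varepsilon)\rho$. Then at least one of the following holds: (a) $(V_1,\dots,V_h,X)$ is a $(\rho,2\varepsilon,\geq n)$-rich inflation of $K_{h+1}$; or (b) there exist $X'\subseteq X$ and $Y'\subseteq Y$ with $|X'|\geq\varepsilon\rho^{h^2}|X|$ and $|Y'|\geq \varepsilon\rho^{h^2}n$ such that $d_{X'}(y)\geq(1+\varepsilon\rho^{2h})p|X'|$ for all $y\in Y'$.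
   Context: For a vertex $y$ and a vertex set $A$, $d_A(y)=|N(y)\cap A|$. For pairwise disjoint $V_1,\dots,V_h\subseteq V(G)$, a canonical copy of $K_h$ is a tuple $(v_1,\dots,v_h)$ with $v_i\in V_i$ and all pairs $v_iv_j$ ($i\neq j$) edges of $G$. The tuple $(V_1,\dots,V_h)$ of pairwise disjoint sets is a $(\rho,\varepsilon,\geq n)$-rich inflation of $K_h$ if $e(G[V_1])\geq\rho\binom{|V_1|}2$, the number of canonical copies of $K_h$ is at least $((1-\varepsilon)\rho)^{\binom h2}\prod_{i=1}^h|V_i|$, and $|V_i|\geq n$ for all $i$. *)

(* Defs.v *)
From HB Require Import structures.
From mathcomp Require Import all_boot all_order all_algebra.
Set Implicit Arguments. Unset Strict Implicit. Unset Printing Implicit Defensive.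
Import Order.TTheory GRing.Theory Num.Theory.
Local Open Scope ring_scope.

Definition simple_graph (T : finType) (e : rel T) : Prop :=
  symmetric e /\ irreflexive e.

Definition deg_in (T : finType) (e : rel T) (A : {set T}) (y : T) : nat :=
  #|[set x in A | e y x]|.

Definition edges_in (T : finType) (e : rel T) (A : {set T}) : nat :=
  #|[set E : {set T} | (E \subset A) &&
      [exists x, exists y, (x != y) && e x y && (E == [set x; y])]]|.

Definition canon_copies (T : finType) (e : rel T) (k : nat)
  (V : 'I_k -> {set T}) : nat :=
  #|[set f : {ffun 'I_k -> T} | [forall i, f i \in V i] &&
      [forall i, forall j, (i != j) ==> e (f i) (f j)]]|.

(* (rho, eps, >= n)-rich inflation of K_k (pairwise disjoint sets);
   the first set V_1 is the one with index 0. *)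
Definition rich_inflation (R : realFieldType) (T : finType) (e : rel T)
  (k : nat) (V : 'I_k -> {set T}) (rho eps : R) (n : nat) : Prop :=
  [/\ (forall i j : 'I_k, i != j -> [disjoint V i & V j]),
      (forall i : 'I_k, val i = 0%N ->
         rho * ('C(#|V i|, 2))%:R <= (edges_in e (V i))%:R),
      ((1 - eps) * rho) ^+ 'C(k, 2) * \prod_(i < k) (#|V i|)%:R
         <= (canon_copies e V)%:R
    & (forall i : 'I_k, (n <= #|V i|)%N)].

Definition extend_tuple (T : finType) (h : nat) (V : 'I_h -> {set T})
  (X : {set T}) : 'I_h.+1 -> {set T} :=
  fun i => match unlift ord_max i with Some j => V j | None => X end.

(* Main.v *)
Set Warnings "-notation-overridden,-ambiguous-paths,-notation-incompatible-prefix".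
Require Import Defs.
From HB Require Import structures.
From mathcomp Require Import all_boot all_order all_algebra.
From mathcomp Require Import zify ring lra.
From Stdlib Require Import Classical.
Set Implicit Arguments. Unset Strict Implicit. Unset Printing Implicit Defensive.
Import Order.TTheory GRing.Theory Num.Theory.


Lemma card_fam (T : finType) (k : nat) (V : 'I_k -> {set T}) :
  #|[set f : {ffun 'I_k -> T} | [forall i, f i \in V i]]| = \prod_(i < k) #|V i|.
Proof.
have -> : #|[set f : {ffun 'I_k -> T} | [forall i, f i \in V i]]| = #|family (fun i => V i)|.
  by apply: eq_card => f; rewrite inE.
rewrite card_family foldrE big_map big_enum /=.
by [].
Qed.

Lemma card_pairs (A B : finType) (C : {set A}) (F : A -> {set B}) :
  #|[set u : A * B | (u.1 \in C) && (u.2 \in F u.1)]| = \sum_(g in C) #|F g|.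
Proof.
rewrite -sum1_card.
rewrite (eq_bigl (fun u : A * B => (u.1 \in C) && (u.2 \in F u.1))); last by move=> u; rewrite inE.
rewrite -(@pair_big_dep _ _ _ _ _ (fun g => g \in C) (fun g x => x \in F g) (fun _ _ => 1%N)) /=.
by apply: eq_bigr => g _; rewrite sum1_card.
Qed.

Lemma card_bigcup_le (T : finType) (k : nat) (A : 'I_k -> {set T}) :
  #|\bigcup_(j < k) A j| <= \sum_(j < k) #|A j|.
Proof.
elim: k A => [|k IH] A; first by rewrite big_ord0 cards0.
rewrite big_ord_recr /= big_ord_recr /=.
apply: leq_trans (leq_card_setU _ _) _.
by rewrite leq_add2r IH.
Qed.


Definition upd (T : finType) k (f : {ffun 'I_k -> T}) (j : 'I_k) (t : T) :
  {ffun 'I_k -> T} := [ffun l => if l == j then t else f l].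

Lemma fiber (T : finType) k (V : 'I_k -> {set T}) (j : 'I_k)
  (B : {ffun 'I_k -> T} -> {set T}) :
  (forall f t, B (upd f j t) = B f) ->
  #|[set f : {ffun 'I_k -> T} | [forall i, f i \in V i] && (f j \in B f)]| * #|V j|
   <= \sum_(g in [set f : {ffun 'I_k -> T} | [forall i, f i \in V i]]) #|B g|.
Proof.
move=> HB.
set S := [set f : {ffun 'I_k -> T} | [forall i, f i \in V i]].
set Bad := [set f : {ffun 'I_k -> T} | _ && _].
rewrite -cardsX -card_pairs.
pose phi := fun u : {ffun 'I_k -> T} * T => (upd u.1 j u.2, u.1 j).
rewrite -(card_in_imset (f := phi)); last first.
  move=> [f t] [f' t'] _ _ [E1 E2] /=.
  have Ef : f = f'.
    apply/ffunP => l; case: (eqVneq l j) => [->//|Hl].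
    by move/ffunP: E1 => /(_ l); rewrite !ffunE (negbTE Hl).
  subst f'; congr pair.
  by move/ffunP: E1 => /(_ j); rewrite !ffunE eqxx.
apply: subset_leq_card; apply/subsetP => u /imsetP [[f t] Hft ->].
move: Hft; rewrite !inE /= => /andP [].
move=> /andP [/forallP Hf Hfj] Ht.
rewrite HB Hfj andbT.
apply/forallP => l; rewrite ffunE; case: (eqVneq l j) => [->//|_]; exact: Hf.
Qed.


Definition Xs (T : finType) (e : rel T) (X : {set T}) k (f : {ffun 'I_k -> T})
  (j : nat) : {set T} := [set x in X | [forall i : 'I_k, (i < j)%N ==> e (f i) x]].

Lemma Xs0 T e X k f : @Xs T e X k f 0 = X.
Proof. by apply/setP => x; rewrite inE; case: (x \in X) => //=; apply/forallP. Qed.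

Lemma Xs_sub T e X k f j : @Xs T e X k f j \subset X.
Proof. by apply/subsetP => x; rewrite inE => /andP []. Qed.

Lemma XsS T e X k f (j : 'I_k) :
  @Xs T e X k f j.+1 = [set x in Xs e X f j | e (f j) x].
Proof.
apply/setP => x; rewrite !inE -andbA; case: (x \in X) => //=.
apply/forallP/andP => [H|[/forallP H1 H2] i].
  split; last by have := H j; rewrite ltnSn.
  by apply/forallP => i; apply/implyP => Hi; have := H i; rewrite ltnS ltnW.
apply/implyP; rewrite ltnS leq_eqVlt => /orP [/eqP Hij|Hi].
  by have -> : i = j by apply: val_inj.
by have := H1 i; rewrite Hi.
Qed.

Lemma Xs_upd T e X k f (j : 'I_k) t (l : nat) : (l <= j)%N ->
  @Xs T e X k (upd f j t) l = Xs e X f l.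
Proof.
move=> Hl; apply/setP => x; rewrite !inE; congr andb.
apply: eq_forallb => i; rewrite ffunE.
case: (eqVneq i j) => [->|//]; by rewrite ltnNge Hl.
Qed.

Definition extf (T : finType) h (f : {ffun 'I_h -> T}) (x : T) : {ffun 'I_h.+1 -> T} :=
  [ffun i => match unlift ord_max i with Some j => f j | None => x end].

Lemma ext_copies (T : finType) (e : rel T) h (V : 'I_h -> {set T}) (X : {set T}) :
  symmetric e ->
  \sum_(f in [set f : {ffun 'I_h -> T} | [forall i, f i \in V i] &&
      [forall i, forall j, (i != j) ==> e (f i) (f j)]]) #|Xs e X f h|
  <= canon_copies e (extend_tuple V X).
Proof.
move=> Hsym.
set C := [set f : {ffun 'I_h -> T} | _ && _].
rewrite -card_pairs /canon_copies.
pose phi := fun u : {ffun 'I_h -> T} * T => extf u.1 u.2.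
rewrite -(card_in_imset (f := phi)); last first.
  move=> [f x] [f' x'] _ _ /= E.
  have Ef : f = f'.
    apply/ffunP => l; move/ffunP: E => /(_ (lift ord_max l)).
    by rewrite !ffunE liftK.
  subst f'; congr pair.
  by move/ffunP: E => /(_ ord_max); rewrite !ffunE unlift_none.
apply: subset_leq_card; apply/subsetP => u /imsetP [[f x] Hfx ->].
move: Hfx; rewrite !inE /= => /andP [/andP [/forallP Hf /forallP Hc]].
move=> /andP [Hx /forallP Hxe].
apply/andP; split.
  apply/forallP => i; rewrite ffunE /extend_tuple.
  by case: (unlift ord_max i).
apply/forallP => i; apply/forallP => j; apply/implyP => Hij.
rewrite !ffunE.
case: unliftP Hij => [a ->|<-]; case: unliftP => [b ->|<-] => Hij.
- have Hab : a != b by apply: contra Hij => /eqP ->.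
  by have := Hc a => /forallP /(_ b); rewrite Hab.
- by have := Hxe a; rewrite ltn_ord.
- by rewrite Hsym; have := Hxe b; rewrite ltn_ord.
- by rewrite eqxx in Hij.
Qed.


Local Open Scope ring_scope.

Lemma powdiff (R : realFieldType) (a c : R) k : 0 <= c -> c <= a ->
  (k.+1)%:R * (a - c) * c ^+ k <= a ^+ k.+1 - c ^+ k.+1.
Proof.
move=> c0 ca; elim: k => [|k IH]; first by rewrite !expr1 expr0 mulr1 mul1r.
rewrite !exprS in IH *.
have ck : 0 <= c ^+ k by apply: exprn_ge0.
have hk : 0 <= k%:R :> R by apply: ler0n.
rewrite -natr1 in IH *. rewrite -natr1.
set A := a ^+ k in IH *; set C := c ^+ k in IH ck *.
set K := k%:R in IH hk *.
have p1 : 0 <= (K + 1) * (a - c) * C by apply: mulr_ge0; [apply: mulr_ge0|]; lra.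
have aC : 0 <= a * A - c * C by lra.
have p2 : c * (a * A - c * C) <= a * (a * A - c * C) by apply: ler_wpM2r; lra.
have -> : (k.+1)%:R = K + 1 :> R by rewrite /K -natr1.
have -> : (K + 1 + 1) * (a - c) * (c * C) = c * ((K + 1) * (a - c) * C) + (a - c) * (c * C) by ring.
have p3 : c * ((K + 1) * (a - c) * C) <= c * (a * A - c * C) by apply: ler_wpM2l.
have -> : a * (a * A) - c * (c * C) = a * (a * A - c * C) + (a - c) * (c * C) by ring.
lra.
Qed.

Lemma bin2_double h : ('C(h, 2) * 2 = h * h.-1)%N.
Proof.
elim: h => [//|h IH]; rewrite binS bin1 mulnDl IH /=; case: h IH => //= h _; lia.
Qed.

Lemma binS2 h : 'C(h.+1, 2) = ('C(h, 2) + h)%N.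
Proof. by rewrite binS bin1. Qed.

Lemma ineq1 (R : realFieldType) (eps rho : R) h : 0 < eps -> eps <= 9^-1 ->
  0 < rho -> rho <= 2^-1 -> (0 < h)%N ->
  ((1 - 2 * eps) * rho) ^+ 'C(h, 2) <=
    ((1 - eps) * rho) ^+ 'C(h, 2) - (h.-1)%:R * (eps * rho ^+ (h ^ 2)).
Proof.
move=> e0 e9 r0 r2 h0.
have i9 : (9 : R)^-1 <= 1/9 by rewrite mul1r.
have i2 : (2 : R)^-1 = 1/2 by rewrite mul1r.
case: h h0 => [//|[|h]] _.
  by rewrite bin_small // !expr0 /= mul0r subr0.
set m := 'C(h.+2, 2).
have Hm := bin2_double h.+2.
have Hm1 : (h.+1 <= m)%N by rewrite -/m in Hm; nia.
case Em : m Hm Hm1 => [|m'] Hm Hm1; first by [].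
have Hm2 : (m'.+1 + m' <= h.+2 ^ 2)%N by nia.
set a := (1 - eps) * rho; set c := (1 - 2 * eps) * rho.
have c0 : 0 <= c by rewrite /c; apply: mulr_ge0; lra.
have ca : c <= a by rewrite /c /a; nra.
have PD := powdiff m' c0 ca.
have Eac : a - c = eps * rho by rewrite /a /c; ring.
rewrite Eac in PD.
suff : (h.+2.-1)%:R * (eps * rho ^+ (h.+2 ^ 2)) <= m'.+1%:R * (eps * rho) * c ^+ m'.
  by move: PD; rewrite /a /c; lra.
have P1 : rho ^+ (h.+2 ^ 2) <= rho ^+ (m'.+1 + m').
  by apply: ler_wiXn2l => //; lra.
rewrite exprD exprS in P1.
have R1 : rho ^+ m' <= (1 - 2 * eps) ^+ m'.
  by apply: lerXn2r; rewrite ?nnegrE; lra.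
have Rm0 : 0 <= rho ^+ m' by apply: exprn_ge0; lra.
rewrite /c exprMn.
set Rm := rho ^+ m' in P1 R1 Rm0 *; set Ee := (1 - 2 * eps) ^+ m' in R1 *.
set P := rho ^+ (h.+2 ^ 2) in P1 *.
have HM : (h.+2.-1)%:R <= m'.+1%:R :> R by rewrite ler_nat.
have H0 : 0 <= (h.+2.-1)%:R :> R by apply: ler0n.
have X1 : rho * Rm * Rm <= rho * Rm * Ee by apply: ler_wpM2l => //; apply: mulr_ge0 => //; lra.
have X0 : 0 <= P by apply: exprn_ge0; lra.
have : (h.+2.-1)%:R * (eps * P) <= m'.+1%:R * (eps * (rho * Rm * Ee)).
  apply: ler_pM => //; first by apply: mulr_ge0 => //; lra.
  apply: ler_wpM2l; first lra.
  by apply: le_trans X1.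
move=> H; apply: le_trans H _; rewrite le_eqVlt; apply/orP; left; apply/eqP; ring.
Qed.

Lemma ineq2 (R : realFieldType) (eps rho p : R) h : 0 < eps -> eps <= 9^-1 ->
  0 < rho -> rho <= 2^-1 -> (0 < h)%N -> 0 <= p -> p <= 1 ->
  ((1 - 2 * eps) * rho) ^+ h <=
    ((1 - eps) * rho) ^+ h - (h.-1)%:R * (eps * rho ^+ (h ^ 2) + eps * rho ^+ (2 * h) * p).
Proof.
move=> e0 e9 r0 r2 h0 p0 p1.
have i9 : (9 : R)^-1 <= 1/9 by rewrite mul1r.
have i2 : (2 : R)^-1 = 1/2 by rewrite mul1r.
case: h h0 => [//|[|k]] _.
  by rewrite !expr1 /= mul0r subr0; nra.
set a := (1 - eps) * rho; set c := (1 - 2 * eps) * rho.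
have c0 : 0 <= c by rewrite /c; apply: mulr_ge0; lra.
have ca : c <= a by rewrite /c /a; nra.
have PD := powdiff k.+1 c0 ca.
have Eac : a - c = eps * rho by rewrite /a /c; ring.
rewrite Eac in PD.
suff : (k.+2.-1)%:R * (eps * rho ^+ (k.+2 ^ 2) + eps * rho ^+ (2 * k.+2) * p)
   <= k.+2%:R * (eps * rho) * c ^+ k.+1.
  by move: PD; rewrite /a /c; lra.
have P1 : rho ^+ (k.+2 ^ 2) <= rho ^+ (2 * k.+2).
  by apply: ler_wiXn2l => //; [lra|lra|nia].
set P := rho ^+ (k.+2 ^ 2) in P1 *.
have E2 : (2 * k.+2 = k.+1.+1 + k.+1.+1)%N by lia.
rewrite E2 exprD in P1 *.
have R1 : rho ^+ k.+1 <= (1 - 2 * eps) ^+ k.+1.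
  by apply: lerXn2r; rewrite ?nnegrE; lra.
have Rm0 : 0 <= rho ^+ k.+1 by apply: exprn_ge0; lra.
rewrite /c exprMn.
set Rm := rho ^+ k.+1 in P1 R1 Rm0 *; set Ee := (1 - 2 * eps) ^+ k.+1 in R1 *.
have Q0 : 0 <= rho * Rm * Rm by apply: mulr_ge0 => //; apply: mulr_ge0 => //; lra.
have EQ : rho ^+ k.+2 * rho ^+ k.+2 = rho * (rho * Rm * Rm) by rewrite /Rm !exprS; ring.
rewrite EQ in P1 *.
set Q := rho * (rho * Rm * Rm) in P1 *.
have Q0' : 0 <= Q by apply: mulr_ge0 => //; lra.
have Qp : Q * p <= Q by rewrite -{2}(mulr1 Q); apply: ler_wpM2l.
have HQ : 2 * Q <= rho * Rm * Ee.
  apply: (@le_trans _ _ (rho * Rm * Rm)).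
    by rewrite /Q mulrA -{2}(mul1r (rho * Rm * Rm)); apply: ler_wpM2r => //; lra.
  by apply: ler_wpM2l => //; apply: mulr_ge0 => //; lra.
have HM : (k.+2.-1)%:R <= k.+2%:R :> R by rewrite ler_nat.
have H0 : 0 <= (k.+2.-1)%:R :> R by apply: ler0n.
have : (k.+2.-1)%:R * (eps * (2 * Q)) <= k.+2%:R * (eps * (rho * Rm * Ee)).
  apply: ler_pM => //; first by apply: mulr_ge0 => //; lra.
  by apply: ler_wpM2l; first lra.
move=> H; apply: le_trans _ (le_trans H _).
  apply: ler_wpM2l => //; rewrite -mulrA -mulrDr; apply: ler_wpM2l; first lra.
  by lra.
rewrite le_eqVlt; apply/orP; left; apply/eqP; ring.
Qed.



Theorem lemma4p5 (R : realFieldType) (T : finType) (e : rel T)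
  (h n : nat) (eps rho p : R) (V : 'I_h -> {set T}) (X : {set T}) :
  simple_graph e ->
  (0 < h)%N -> (0 < n)%N ->
  0 < eps -> eps <= 9^-1 ->
  0 < rho -> rho <= 2^-1 ->
  rich_inflation e V rho eps n ->
  [disjoint X & \bigcup_(i < h) V i] ->
  (n <= #|X|)%N ->
  (1 - eps) * rho <= p ->
  (forall y, y \in \bigcup_(i < h) V i -> p * (#|X|)%:R <= (deg_in e X y)%:R) ->
  rich_inflation e (extend_tuple V X) rho (2 * eps) n \/
  exists (X' Y' : {set T}),
    [/\ X' \subset X, Y' \subset \bigcup_(i < h) V i,
        eps * rho ^+ (h ^ 2) * (#|X|)%:R <= (#|X'|)%:R,
        eps * rho ^+ (h ^ 2) * n%:R <= (#|Y'|)%:R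
      & forall y, y \in Y' ->
          (1 + eps * rho ^+ (2 * h)) * p * (#|X'|)%:R <= (deg_in e X' y)%:R].
Proof.
move=> [Hsym Hirr] h0 n0 e0 e9 r0 r2 [Hdisj Hedge Hcop Hsz] HXY HnX Hp Hdeg.
match goal with |- _ \/ ?B => case: (classic B) => [Hb|Hnb]; [by right|left] end.
set Y := \bigcup_(i < h) V i in HXY Hdeg Hnb.
set beta := eps * rho ^+ (h ^ 2) in Hnb.
set delta := eps * rho ^+ (2 * h) in Hnb.
have i9 : (9 : R)^-1 <= 1/9 by rewrite mul1r.
have i2 : (2 : R)^-1 = 1/2 by rewrite mul1r.
have Bsmall : forall X' Y' : {set T}, X' \subset X -> Y' \subset Y ->
    beta * (#|X|)%:R <= (#|X'|)%:R ->
    (forall y, y \in Y' -> (1 + delta) * p * (#|X'|)%:R <= (deg_in e X' y)%:R) ->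
    (#|Y'|)%:R < beta * n%:R.
  move=> X' Y' H1 H2 H3 H4; rewrite ltNge; apply/negP => H5.
  by apply: Hnb; exists X', Y'; split.
have Xpos : (0 < #|X|)%N by apply: leq_trans HnX.
have XposR : 0 < (#|X|)%:R :> R by rewrite ltr0n.
pose i0 : 'I_h := Ordinal h0.
have [y0 Hy0] : exists y0, y0 \in V i0.
  have : (0 < #|V i0|)%N by apply: leq_trans (Hsz i0).
  by rewrite card_gt0 => /set0Pn.
have Yy0 : y0 \in Y by apply/bigcupP; exists i0.
have degX : forall A y, (deg_in e A y <= #|A|)%N.
  by move=> A y; apply: subset_leq_card; apply/subsetP => x; rewrite inE => /andP [].
have p1 : p <= 1.
  have := Hdeg y0 Yy0; have := degX X y0; rewrite -(ler_nat R) => H1 H2.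
  have H3 : p * (#|X|)%:R <= 1 * (#|X|)%:R by rewrite mul1r; apply: le_trans H2 H1.
  by rewrite ler_pM2r in H3.
have a0 : 0 <= (1 - eps) * rho by apply: mulr_ge0; lra.
have p0 : 0 <= p by apply: le_trans Hp.
have beta0 : 0 <= beta by apply: mulr_ge0; [lra|apply: exprn_ge0; lra].
have delta0 : 0 <= delta by apply: mulr_ge0; [lra|apply: exprn_ge0; lra].
pose eta := beta + delta * p.
have eta0 : 0 <= eta by rewrite /eta; apply: addr_ge0 => //; apply: mulr_ge0.
pose B (j : 'I_h) (f : {ffun 'I_h -> T}) : {set T} :=
  if (0 < j)%N && (beta * (#|X|)%:R <= (#|X :\: Xs e X f j|)%:R) then
    [set y in Y | (1 + delta) * p * (#|X :\: Xs e X f j|)%:R <=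
                  (deg_in e (X :\: Xs e X f j) y)%:R]
  else set0.
have Bbound : forall j f, (#|B j f|)%:R <= beta * n%:R.
  move=> j f; rewrite /B; case: ifP => [/andP [_ Hc]|_].
    apply/ltW; apply: (Bsmall (X :\: Xs e X f j)).
    - exact: subsetDl.
    - by apply/subsetP => y; rewrite inE => /andP [].
    - exact: Hc.
    - by move=> y; rewrite inE => /andP [].
  by rewrite cards0; apply: mulr_ge0 => //; apply: ler0n.
have Bupd : forall j f t, B j (upd f j t) = B j f.
  by move=> j f t; rewrite /B Xs_upd.
have B0 : forall j f, val j = 0%N -> B j f = set0.
  by move=> j f Hj; rewrite /B Hj.
pose C := [set f : {ffun 'I_h -> T} | [forall i, f i \in V i] &&
      [forall i, forall j, (i != j) ==> e (f i) (f j)]].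
have CY : forall f j, f \in C -> f j \in Y.
  move=> f j; rewrite inE => /andP [/forallP H _]; apply/bigcupP; exists j => //.
have degsplit : forall (A : {set T}) y, A \subset X ->
    deg_in e X y = (deg_in e A y + deg_in e (X :\: A) y)%N.
  move=> A y HA; rewrite /deg_in -(cardsID A [set x in X | e y x]); congr addn.
    apply: eq_card => x; rewrite !inE; case Hx: (x \in A); rewrite ?andbF ?andbT //.
    by rewrite (subsetP HA x Hx).
  by apply: eq_card => x; rewrite !inE; case: (x \in A) => //=; rewrite andbC.
have cardsplit : forall (A : {set T}), A \subset X ->
    #|X| = (#|A| + #|X :\: A|)%N.
  by move=> A HA; rewrite -(cardsID A X) (setIidPr HA).
have step : forall f (j : 'I_h), (0 < j)%N -> f \in C -> f j \notin B j f ->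
    p * (#|Xs e X f j|)%:R - eta * (#|X|)%:R <= (deg_in e (Xs e X f j) (f j))%:R.
  move=> f j Hj HC HB.
  set A := Xs e X f j.
  have HA : A \subset X by apply: Xs_sub.
  have Hy := CY f j HC.
  have Hd := Hdeg _ Hy.
  rewrite (degsplit A _ HA) natrD in Hd.
  have Hc := cardsplit A HA.
  have HXc : (#|X :\: A|)%:R <= (#|X|)%:R :> R by rewrite ler_nat; apply: subset_leq_card; apply: subsetDl.
  have Hdc := degX (X :\: A) (f j); rewrite -(ler_nat R) in Hdc.
  rewrite Hc natrD in Hd HXc.
  have pXc : 0 <= p * (#|X :\: A|)%:R by apply: mulr_ge0 => //; apply: ler0n.
  have dX : 0 <= delta * p * (#|X :\: A|)%:R by apply: mulr_ge0; [apply: mulr_ge0|apply: ler0n].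
  have dX' : delta * p * (#|X :\: A|)%:R <= delta * p * ((#|A|)%:R + (#|X :\: A|)%:R).
    by apply: ler_wpM2l; [apply: mulr_ge0|]; lra.
  have bX : 0 <= beta * ((#|A|)%:R + (#|X :\: A|)%:R) by apply: mulr_ge0 => //; apply: addr_ge0; apply: ler0n.
  have dX2 : 0 <= delta * p * ((#|A|)%:R + (#|X :\: A|)%:R) by apply: mulr_ge0; [apply: mulr_ge0|apply: addr_ge0; apply: ler0n].
  rewrite /eta Hc natrD.
  move: HB; rewrite /B Hj /=; case: ifP => Hcond.
    rewrite inE Hy /= -ltNge => Hlt.
    move: Hd Hlt; rewrite -/A => H1 H2. move: H1 H2 dX' bX. move: (#|A|%:R : R) (#|X :\: A|%:R : R) (deg_in e A (f j))%:R (deg_in e (X :\: A) (f j))%:R => a1 a2 a3 a4 H1 H2 H3 H4. lra.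
  move=> _; move/negbT: Hcond; rewrite -ltNge => Hlt.
  rewrite Hc natrD in Hlt; move: Hd Hlt Hdc; rewrite -/A => H1 H2 H3; nra.
have lower : forall f, f \in C -> [forall j, f j \notin B j f] ->
    forall j, (0 < j)%N -> (j <= h)%N ->
    (p ^+ j - (j.-1)%:R * eta) * (#|X|)%:R <= (#|Xs e X f j|)%:R.
  move=> f HC /forallP Hg; elim=> [//|j IH] _ Hj.
  case: j IH Hj => [|j] IH Hj;
  pose jj : 'I_h := Ordinal Hj;
  (have := XsS e X f jj; rewrite /= => ->).
    rewrite /= Xs0 mul0r subr0 expr1.
    by apply: Hdeg; apply: CY.
  have IH' := IH isT (ltnW Hj).
  have St := step f jj isT HC (Hg jj).
  rewrite /= in St IH' *.
  set D := (deg_in e (Xs e X f j.+1) (f jj))%:R in St *.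
  set Z := (#|Xs e X f j.+1|)%:R in St IH'.
  set x := (#|X|)%:R in St IH' *.
  have x0 : 0 <= x by apply: ler0n.
  have pI : p * ((p ^+ j.+1 - (j%:R) * eta) * x) <= p * Z by apply: ler_wpM2l.
  have j0 : 0 <= j%:R :> R by apply: ler0n.
  have q1 : p * (j%:R * eta * x) <= j%:R * eta * x.
    rewrite -{2}(mul1r (j%:R * eta * x)); apply: ler_wpM2r => //.
    by apply: mulr_ge0 => //; apply: mulr_ge0.
  have -> : (j.+1)%:R = j%:R + 1 :> R by rewrite -natr1.
  rewrite exprS.
  have E1 : p * ((p ^+ j.+1 - j%:R * eta) * x) = p * p ^+ j.+1 * x - p * (j%:R * eta * x) by ring.
  rewrite E1 in pI.
  have -> : (p * p ^+ j.+1 - (j%:R + 1) * eta) * x = p * p ^+ j.+1 * x - j%:R * eta * x - eta * x by ring.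
  lra.
pose Sgood := [set f : {ffun 'I_h -> T} | [forall j, f j \notin B j f]].
pose bad (j : 'I_h) := [set f : {ffun 'I_h -> T} | [forall i, f i \in V i] && (f j \in B j f)].
pose Pi := \prod_(i < h) (#|V i|)%:R : R.
have Pi0 : 0 <= Pi by apply: prodr_ge0 => i _; apply: ler0n.
have Pi_eq : (#|[set f : {ffun 'I_h -> T} | [forall i, f i \in V i]]|)%:R = Pi.
  by rewrite card_fam natr_prod.
have badj : forall j, j != i0 -> (#|bad j|)%:R <= beta * Pi.
  move=> j Hj.
  have Hf := @fiber T h V j (B j) (Bupd j).
  rewrite -(ler_nat R) natrM natr_sum in Hf.
  have H2 : \sum_(g in [set f : {ffun 'I_h -> T} | [forall i, f i \in V i]]) (#|B j g|)%:R
       <= \sum_(g in [set f : {ffun 'I_h -> T} | [forall i, f i \in V i]]) (beta * n%:R) :> R.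
    by apply: ler_sum => g _; apply: Bbound.
  rewrite sumr_const -[_ *+ #|_|]mulr_natl Pi_eq in H2.
  have Vj : (0 < #|V j|)%N by apply: leq_trans (Hsz j).
  have H3 : Pi * (beta * n%:R) <= Pi * (beta * (#|V j|)%:R).
    by apply: ler_wpM2l => //; apply: ler_wpM2l => //; rewrite ler_nat.
  have H4 : (#|bad j|)%:R * (#|V j|)%:R <= beta * Pi * (#|V j|)%:R.
    apply: le_trans Hf _; apply: le_trans H2 _; apply: le_trans H3 _.
    by rewrite le_eqVlt; apply/orP; left; apply/eqP; ring.
  by rewrite ler_pM2r ?ltr0n in H4.
have bad0 : bad i0 = set0.
  apply/setP => f; rewrite [in LHS]inE (B0 i0 f) // in_set0 andbF; by rewrite in_set0.
have sumbad : \sum_(j < h) (#|bad j|)%:R <= (h.-1)%:R * (beta * Pi).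
  rewrite (bigD1 i0) //= bad0 cards0 add0r.
  apply: le_trans (ler_sum _ (fun j Hj => badj j Hj)) _.
  rewrite (eq_bigl (fun j => j \in predC1 i0)) // sumr_const cardC1 card_ord.
  by rewrite mulr_natl.
have CG : C :\: Sgood \subset \bigcup_(j < h) bad j.
  apply/subsetP => f; rewrite !inE => /andP [Hng /andP [HV _]].
  move: Hng => /forallPn [j]; rewrite negbK => Hj.
  by apply/bigcupP; exists j => //; rewrite inE HV Hj.
have Gcount : (#|C|)%:R - (h.-1)%:R * (beta * Pi) <= (#|C :&: Sgood|)%:R :> R.
  have H1 : (#|C :\: Sgood| <= \sum_(j < h) #|bad j|)%N :=
    leq_trans (subset_leq_card CG) (card_bigcup_le bad).
  rewrite -(ler_nat R) natr_sum in H1.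
  have H2 : (#|C|)%:R = (#|C :&: Sgood|)%:R + (#|C :\: Sgood|)%:R :> R.
    by rewrite -natrD cardsID.
  lra.
have Ew : forall i : 'I_h, unlift ord_max (widen_ord (leqnSn h) i) = Some i.
  move=> i; have -> : widen_ord (leqnSn h) i = lift ord_max i.
    by apply: val_inj; rewrite /= /bump leqNgt ltn_ord.
  by rewrite liftK.
split.
- move=> i j Hij; rewrite /extend_tuple.
  case: unliftP Hij => [a Ea|Ea]; case: unliftP => [b Eb|Eb] Hij.
  + apply: Hdisj; rewrite Ea Eb in Hij; by apply: contra Hij => /eqP ->.
  + rewrite disjoint_sym; apply: disjointWr HXY; exact: (bigcup_sup a (P := predT)).
  + apply: disjointWr HXY; exact: (bigcup_sup b (P := predT)).
  + by rewrite Ea Eb eqxx in Hij.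
- move=> i Hi; rewrite /extend_tuple.
  case: unliftP Hi => [a Ea|Ea] Hi.
    by apply: Hedge; move: Hi; rewrite Ea /= /bump leqNgt ltn_ord.
  by move: Hi; rewrite Ea /= => Hh; have := h0; rewrite Hh.
- rewrite big_ord_recr /=.
  under eq_bigr => i _ do rewrite /extend_tuple Ew.
  rewrite /extend_tuple unlift_none binS2 exprD.
  set c := (1 - 2 * eps) * rho.
  have I1 := ineq1 e0 e9 r0 r2 h0.
  have I2 := ineq2 e0 e9 r0 r2 h0 p0 p1.
  rewrite -/c in I1 I2.
  have aph : ((1 - eps) * rho) ^+ h <= p ^+ h by apply: lerXn2r; rewrite ?nnegrE.
  pose L := (p ^+ h - (h.-1)%:R * eta) * (#|X|)%:R.
  have sumCR : \sum_(f in C) (#|Xs e X f h|)%:R <= (canon_copies e (extend_tuple V X))%:R :> R.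
    by rewrite -natr_sum ler_nat; apply: ext_copies.
  have sumG : \sum_(f in C :&: Sgood) (#|Xs e X f h|)%:R <= \sum_(f in C) (#|Xs e X f h|)%:R :> R.
    rewrite [X in _ <= X](big_setID Sgood) /= lerDl.
    by apply: sumr_ge0 => f _; apply: ler0n.
  have sumL : (#|C :&: Sgood|)%:R * L <= \sum_(f in C :&: Sgood) (#|Xs e X f h|)%:R.
    rewrite mulr_natl -sumr_const; apply: ler_sum => f; rewrite inE => /andP [HC Hg].
    by apply: lower => //; rewrite inE in Hg.
  have HcopC : ((1 - eps) * rho) ^+ 'C(h, 2) * Pi <= (#|C|)%:R by [].
  have G1 : c ^+ 'C(h, 2) * Pi <= (#|C :&: Sgood|)%:R.
    have : c ^+ 'C(h, 2) * Pi <= (((1 - eps) * rho) ^+ 'C(h, 2) - (h.-1)%:R * beta) * Pi.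
      by apply: ler_wpM2r.
    rewrite /beta; move: Gcount HcopC; rewrite /beta; nra.
  have G2 : c ^+ h * (#|X|)%:R <= L.
    rewrite /L; apply: ler_wpM2r; first by apply: ler0n.
    rewrite /eta /beta /delta; lra.
  have c0 : 0 <= c by rewrite /c; apply: mulr_ge0; lra.
  have G3 : (c ^+ 'C(h, 2) * Pi) * (c ^+ h * (#|X|)%:R) <= (#|C :&: Sgood|)%:R * L.
    apply: ler_pM => //.
      by apply: mulr_ge0 => //; apply: exprn_ge0.
    by apply: mulr_ge0; [apply: exprn_ge0|apply: ler0n].
  have E : c ^+ 'C(h, 2) * c ^+ h * (Pi * (#|X|)%:R) = (c ^+ 'C(h, 2) * Pi) * (c ^+ h * (#|X|)%:R) by ring.
  rewrite /Pi in E; rewrite E.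
  apply: le_trans G3 _; apply: le_trans sumL _; apply: le_trans sumG _; exact: sumCR.
- move=> i; rewrite /extend_tuple; case: unlift => [a|] //.
Qed.
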